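(* Let $\mathrm r=(r_1,\dots,r_d)\in\mathbb{Z}_+^d$ with $\mathrm r>0$. Then the map $\Phi:\bar{\mathcal F}_d^{\mathrm r}\to \bar S_d^{\mathrm r}\times C_d^{\mathrm r}$, $(\mathbf f,c_{\mathbf f})\mapsto(\Psi((\mathbf f,c_{\mathbf f})),\mathrm c_{(\mathbf f,c_{\mathbf f})})$, is a bijection.
   Context: $d\ge2$, $[d]=\{1,\dots,d\}$. A plane forest is a finite or infinite sequence $\mathbf t_1,\mathbf t_2,\dots$ of finite rooted plane (ordered) trees; its vertices are listed in breadth-first search order (first the vertices of $\mathbf t_1$ generation by generation, each generation from left to right, then those of $\mathbf t_2$, etc.). A $d$-type forest $(\mathbf f,c_{\mathbf f})$ is a plane forest with a map $c_{\mathbf f}$ from its vertices to $[d]$ (the type) such that children of a common parent appear, from left to right, in nondecreasing order of type; $\mathcal F_d$ is the set of (unlabeled) $d$-type forests. $p_j(u)$ is the number of children of type $j$ of the vertex $u$. A subtree of type $i$ is a maximal connected subgraph all of whose vertices have type $i$; the subforest $\mathbf f^{(i)}$ of type $i$ is the plane forest formed by the subtrees of type $i$, ranked according to the order of their roots in $\mathbf f$; $u^{(i)}_1,u^{(i)}_2,\dots$ are its vertices in its own breadth-first order. The root type sequence is $\mathrm c_{(\mathbf f,c_{\mathbf f})}=(c_{\mathbf f}(r(\mathbf t_1)),c_{\mathbf f}(r(\mathbf t_2)),\dots)$ where $r(\mathbf t)$ is the root of $\mathbf t$. $S_d$: families $x=(x^{(1)},\dots,x^{(d)})$, $x^{(i)}=(x^{i,1},\dots,x^{i,d})$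 a $\mathbb{Z}^d$-valued sequence indexed by $\{0,\dots,n_i\}$ ($0\le n_i\le\infty$), $x^{(i)}_0=0$, $x^{i,j}$ nondecreasing for $i\ne j$, $x^{i,i}_{n+1}-x^{i,i}_n\ge -1$; $(n_1,\dots,n_d)$ is its length; $x^{i,j}(n):=x^{i,j}_n$. $\Psi:\mathcal F_d\to S_d$ maps $(\mathbf f,c_{\mathbf f})$ to $x$ where $n_i$ is the number of vertices of $\mathbf f^{(i)}$, $x^{(i)}_0=0$, and $x^{i,j}_{n+1}-x^{i,j}_n=p_j(u^{(i)}_{n+1})$ for $j\ne i$, $x^{i,i}_{n+1}-x^{i,i}_n=p_i(u^{(i)}_{n+1})-1$, $0\le n\le n_i-1$. Coordinatewise order $\le$ on $\overline{\mathbb{Z}}_+^d$; $\mathrm q<\mathrm q'$ means $\mathrm q\le\mathrm q'$ and $\mathrm q\ne\mathrm q'$. A solution of $(\mathrm r,x)$ (for $x$ of length $\mathrm q$) is $\mathrm s\in\mathbb{Z}_+^d$, $\mathrm s\le\mathrm q$, with $r_j+\sum_i x^{i,j}(s_i)=0$ for all $j$; the smallest solution is a solution $\le$ every other solution. $S_d^{\mathrm r}$ is the set of $x\in S_d$ whose length lies in $\mathbb{N}^d$ ($\mathbb N=\{1,2,\dots\}$) and is the smallest solution of $(\mathrm r,x)$; $\bar S_d^{\mathrm r}$ is the set of $x\in S_d^{\mathrm r}$ with $x^{i,i}_k=-k$ for all $k$ and $i$. For $r=r_1+\dots+r_d$, $C_d^{\mathrm r}=\{c\in[d]^r:\#\{j\in[r]:c_j=i\}=r_i,\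 i\in[d]\}$. $\mathcal F_d^{\mathrm r}$ is the set of $(\mathbf f,c_{\mathbf f})\in\mathcal F_d$ with $r_1+\dots+r_d$ trees, containing at least one vertex of each type, with root type sequence in $C_d^{\mathrm r}$; $\bar{\mathcal F}_d^{\mathrm r}$ is the set of those $(\mathbf f,c_{\mathbf f})\in\mathcal F_d^{\mathrm r}$ in which no vertex of type $i$ has a child of type $i$, for every $i$. *)

(* Defs.v *)
From mathcomp Require Import all_boot all_order all_algebra.
Set Implicit Arguments. Unset Strict Implicit. Unset Printing Implicit Defensive.
Import GRing.Theory Num.Theory.
Local Open Scope ring_scope.

(* Types are encoded by 'I_d (type k+1 of the paper <-> ordinal k). *)

(* A finite rooted plane tree whose vertices carry a type in 'I_d:
   MNode c [:: t1; ...; tk] is a root of type c with ordered subtrees t1..tk.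
   A vertex is represented by the subtree rooted at it. *)
Inductive mtree (d : nat) : Type := MNode of 'I_d & seq (mtree d).

Definition typ d (t : mtree d) : 'I_d := let: MNode c _ := t in c.
Definition children d (t : mtree d) : seq (mtree d) := let: MNode _ cs := t in cs.

Fixpoint tsize d (t : mtree d) : nat :=
  let: MNode _ cs := t in (sumn (map (@tsize d) cs)).+1.

Definition mforest d := seq (mtree d).

(* Breadth-first listing of the vertices of a tree generated from a root [a]
   by a child-selection function [sel], generation by generation, each
   generation from left to right; [fuel] must be at least the height + 1. *)
Definition bfs (A : Type) (sel : A -> seq A) (fuel : nat) (a : A) : seq A :=
  flatten (mkseq (fun k => iter k (fun l => flatten (map sel l)) [:: a]) fuel).

Definition vsel d (p : mtree d * option 'I_d) : seq (mtree d * option 'I_d) :=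
  [seq (c, Some (typ p.1)) | c <- children p.1].

Definition vertices_par d (f : mforest d) : seq (mtree d * option 'I_d) :=
  flatten [seq bfs (@vsel d) (tsize t) (t, None) | t <- f].

Definition vertices d (f : mforest d) : seq (mtree d) :=
  [seq p.1 | p <- vertices_par f].

Definition pch d (u : mtree d) (j : 'I_d) : nat :=
  count (fun c => typ c == j) (children u).

Definition in_Fd d (f : mforest d) : Prop :=
  all (fun u => sorted (fun a b => (typ a <= typ b)%N) (children u)) (vertices f).

(* Roots of the subtrees of type i (maximal connected type-i subgraphs), in
   the order in which they appear in f: vertices of type i that are roots of
   a tree of f or whose parent has a type different from i. *)
Definition sub_roots d (f : mforest d) (i : 'I_d) : seq (mtree d) :=
  [seq p.1 | p <- vertices_par f & (typ p.1 == i) && (p.2 != Some i)].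

(* u^{(i)}_1, u^{(i)}_2, ... : vertices of the subforest f^{(i)}, listed in its
   own breadth-first order (trees of f^{(i)} one after the other). *)
Definition sub_vertices d (f : mforest d) (i : 'I_d) : seq (mtree d) :=
  flatten [seq bfs (fun u => [seq c <- children u | typ c == i]) (tsize t) t
          | t <- sub_roots f i].

(* Elements of S_d of finite length: x i = [:: x^{(i)}_0; ...; x^{(i)}_{n_i}],
   each x^{(i)}_k being the vector (x^{i,1}_k, ..., x^{i,d}_k) in Z^d. *)
Definition Sdata d := {ffun 'I_d -> seq {ffun 'I_d -> int}}.

Definition xlen d (x : Sdata d) (i : 'I_d) : nat := (size (x i)).-1.

Definition xval d (x : Sdata d) (i j : 'I_d) (k : nat) : int :=
  (nth [ffun=> 0] (x i) k) j.

Definition in_Sd d (x : Sdata d) : Prop :=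
  [/\ forall i, (0 < size (x i))%N,
      forall i j, xval x i j 0 = 0,
      forall i j k, i != j -> (k < xlen x i)%N -> xval x i j k <= xval x i j k.+1
    & forall i k, (k < xlen x i)%N -> xval x i i k - 1 <= xval x i i k.+1].

Definition is_solution d (r : 'I_d -> nat) (x : Sdata d) (s : 'I_d -> nat) : Prop :=
  (forall i, (s i <= xlen x i)%N) /\
  (forall j, (r j)%:Z + \sum_(i < d) xval x i j (s i) = 0).

Definition is_smallest_solution d (r : 'I_d -> nat) (x : Sdata d) (s : 'I_d -> nat) : Prop :=
  is_solution r x s /\ (forall s', is_solution r x s' -> forall i, (s i <= s' i)%N).

Definition in_Sr d (r : 'I_d -> nat) (x : Sdata d) : Prop :=
  [/\ in_Sd x, forall i, (0 < xlen x i)%N & is_smallest_solution r x (xlen x)].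

Definition in_barSr d (r : 'I_d -> nat) (x : Sdata d) : Prop :=
  in_Sr r x /\ (forall i k, (k <= xlen x i)%N -> xval x i i k = - (k%:Z)).

Definition in_Cr d (r : 'I_d -> nat) (c : seq 'I_d) : Prop :=
  size c = (\sum_(i < d) r i)%N /\ (forall i, count (pred1 i) c = r i).

Definition root_types d (f : mforest d) : seq 'I_d := [seq typ t | t <- f].

Definition in_Fr d (r : 'I_d -> nat) (f : mforest d) : Prop :=
  [/\ in_Fd f, size f = (\sum_(i < d) r i)%N,
      forall i, has (fun u => typ u == i) (vertices f)
    & in_Cr r (root_types f)].

Definition in_barFr d (r : 'I_d -> nat) (f : mforest d) : Prop :=
  in_Fr r f /\
  all (fun u => all (fun c => typ c != typ u) (children u)) (vertices f).

Definition Psi d (f : mforest d) : Sdata d :=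
  [ffun i =>
    let us := sub_vertices f i in
    mkseq (fun k => [ffun j => \sum_(u <- take k us) ((pch u j)%:Z - (i == j)%:Z)])
          (size us).+1].

Definition Phi d (f : mforest d) : Sdata d * seq 'I_d := (Psi f, root_types f).

(* Main.v *)
Require Import Defs.
From mathcomp Require Import all_boot all_order all_algebra zify.
Require Import Defs.
Set Implicit Arguments. Unset Strict Implicit. Unset Printing Implicit Defensive.
Import GRing.Theory Num.Theory.

Fixpoint gb (A : Type) (sel : A -> seq A) n (L : seq A) : seq A :=
  if n is n'.+1 then L ++ gb sel n' (flatten (map sel L)) else [::].

Lemma gb_nil A (sel : A -> seq A) n : gb sel n [::] = [::].
Proof. by elim: n => //= n ->. Qed.



Lemma bfs_gb A (sel : A -> seq A) n L :
  flatten (mkseq (fun k => iter k (fun l => flatten (map sel l)) L) n) = gb sel n L.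
Proof.
elim: n L => [|n IH] L //=.
rewrite /mkseq /= -(IH (flatten (map sel L))) /mkseq.
congr (_ ++ _); congr flatten.
rewrite (iotaDl 1 0 n) -map_comp; apply: eq_map => k /=.
by rewrite add0n -iterSr iterS.
Qed.

Lemma map_gb A A' (sel : A -> seq A) (sel' : A' -> seq A') (g : A -> A') n L :
  (forall a, map g (sel a) = sel' (g a)) ->
  map g (gb sel n L) = gb sel' n (map g L).
Proof.
move=> H; elim: n L => [|n IH] L //=.
rewrite map_cat IH map_flatten -!map_comp; congr (_ ++ gb _ _ (flatten _)).
by apply: eq_map => a /=; rewrite H.
Qed.

Definition lv d (F : seq (mtree d)) := flatten (map (@children d) F).
Definition W d (F : seq (mtree d)) := sumn (map (@tsize d) F).
Definition B d (F : seq (mtree d)) := gb (@children d) (W F) F.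

Lemma W_cat d (F G : seq (mtree d)) : W (F ++ G) = W F + W G.
Proof. by rewrite /W map_cat sumn_cat. Qed.

Lemma W_cons d (t : mtree d) F : W (t :: F) = tsize t + W F.
Proof. by []. Qed.

Lemma tsizeE d (t : mtree d) : tsize t = (W (children t)).+1.
Proof. by case: t. Qed.

Lemma lv_cons d (t : mtree d) F : lv (t :: F) = children t ++ lv F.
Proof. by []. Qed.

Lemma W_lv d (F : seq (mtree d)) : W (lv F) + size F = W F.
Proof.
elim: F => [|t F IH] //=.
by rewrite lv_cons W_cat W_cons tsizeE -IH addnS -addSn addnA.
Qed.

Lemma size_W d (F : seq (mtree d)) : size F <= W F.
Proof. by rewrite -W_lv leq_addl. Qed.

Lemma W_eq0 d (F : seq (mtree d)) : W F = 0 -> F = [::].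
Proof. by case: F => // t F; rewrite W_cons tsizeE. Qed.

Lemma gb_enough d n m (F : seq (mtree d)) : W F <= n -> W F <= m ->
  gb (@children d) n F = gb (@children d) m F.
Proof.
elim: n m F => [|n IH] m F hn hm /=.
  have -> : F = [::] by apply: W_eq0; lia.
  by rewrite /= !gb_nil.
case: m hm => [|m] hm.
  have -> : F = [::] by apply: W_eq0; lia.
  by rewrite /= !gb_nil.
rewrite /=; congr (_ ++ _); case: F hm hn => [|t F] hm hn.
  by rewrite !gb_nil.
have h := W_lv (t :: F); rewrite /lv in h; move: h; rewrite [size _]/= => h.
apply: IH; lia.
Qed.

Lemma gbE d n (F : seq (mtree d)) : W F <= n -> gb (@children d) n F = B F.
Proof. by move=> h; apply: gb_enough. Qed.

Lemma B_nil d : B ([::] : seq (mtree d)) = [::].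
Proof. by []. Qed.

Lemma B_rec d (F : seq (mtree d)) : B F = F ++ B (lv F).
Proof.
case: F => [|t F] //.
have h := W_lv (t :: F); move: h; rewrite [size _]/= {1}/B.
case: (W (t :: F)) => [|n] h; first lia.
by rewrite /= -/(lv _) gbE //; rewrite -lv_cons; lia.
Qed.

Lemma vertices_B d (f : mforest d) : vertices f = flatten [seq B [:: t] | t <- f].
Proof.
rewrite /vertices /vertices_par map_flatten -map_comp; congr flatten.
apply: eq_map => t /=; rewrite /bfs bfs_gb (@map_gb _ _ _ (@children d)) //=.
  by rewrite /B /W /= addn0.
by move=> [u o] /=; rewrite /vsel -map_comp map_id.
Qed.

Definition tc d (i : 'I_d) (L : seq (mtree d)) := count (fun u => typ u == i) L.
Definition tf d (i : 'I_d) (L : seq (mtree d)) := [seq u <- L | typ u == i].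

Lemma lv_cat d (L1 L2 : seq (mtree d)) : lv (L1 ++ L2) = lv L1 ++ lv L2.
Proof. by rewrite /lv map_cat flatten_cat. Qed.

Lemma tc_cat d i (L1 L2 : seq (mtree d)) : tc i (L1 ++ L2) = tc i L1 + tc i L2.
Proof. by rewrite /tc count_cat. Qed.

Lemma W_lv_lt d (F : seq (mtree d)) : 0 < size F -> W (lv F) < W F.
Proof. by case: F => // t F _; have := W_lv (t :: F); rewrite /=; lia. Qed.

Lemma B_balance d i (F : seq (mtree d)) : tc i (B F) = tc i F + tc i (lv (B F)).
Proof.
move: {2}(W F) (leqnn (W F)) => n; elim: n F => [|n IH] F hF.
  by have -> : F = [::] by apply: W_eq0; lia.
case: (posnP (size F)) => [/size0nil ->|nF] //.
rewrite B_rec tc_cat lv_cat tc_cat IH; last by have := W_lv_lt nF; lia.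
lia.
Qed.

Lemma take_cat' A (s1 s2 : seq A) k :
  take k (s1 ++ s2) = if k <= size s1 then take k s1 else s1 ++ take (k - size s1) s2.
Proof.
rewrite take_cat; case: ltngtP => h //.
  by rewrite h take_size subnn take0 cats0.
Qed.

Lemma take_cat_ge A (s1 s2 : seq A) k : size s1 <= k ->
  take k (s1 ++ s2) = s1 ++ take (k - size s1) s2.
Proof. by move=> h; rewrite take_cat' leq_eqVlt; case: ltngtP h => // ->; rewrite subnn take0 cats0 take_size. Qed.

Lemma tc_take_le d i (L : seq (mtree d)) k : tc i (take k L) <= tc i L.
Proof. by rewrite -{2}(cat_take_drop k L) tc_cat leq_addr. Qed.

Lemma B_prefix d i (F : seq (mtree d)) k : k < size (B F) ->
  tc i (take k.+1 (B F)) <= tc i F + tc i (lv (take k (B F))).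
Proof.
move: {2}(W F) (leqnn (W F)) => n; elim: n F k => [|n IH] F k hF.
  by have -> : F = [::] by apply: W_eq0; lia.
case: (posnP (size F)) => [/size0nil ->|nF] //.
rewrite B_rec size_cat => hk.
case: (leqP k.+1 (size F)) => h1.
  by rewrite take_cat' h1 (leq_trans (tc_take_le _ _ _)) ?leq_addr.
rewrite !take_cat_ge; try lia.
have -> : k.+1 - size F = (k - size F).+1 by lia.
rewrite tc_cat lv_cat tc_cat addnA -addnA leq_add2l.
have h2 : W (lv F) <= n by have := W_lv_lt nF; lia.
by apply: (leq_trans (IH _ _ h2 _)) => //; lia.
Qed.

Definition VB d (f : seq (mtree d)) := flatten [seq B [:: t] | t <- f].

Lemma VB_cons d (t : mtree d) f : VB (t :: f) = B [:: t] ++ VB f.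
Proof. by []. Qed.

Lemma tc_cons d i (t : mtree d) f : tc i (t :: f) = tc i [:: t] + tc i f.
Proof. by rewrite /tc /= addn0. Qed.

Lemma VB_balance d i (f : seq (mtree d)) : tc i (VB f) = tc i f + tc i (lv (VB f)).
Proof.
elim: f => [|t f IH] //.
by rewrite VB_cons tc_cat lv_cat tc_cat B_balance IH (tc_cons i t f); lia.
Qed.

Lemma VB_prefix d i (f : seq (mtree d)) k : k < size (VB f) ->
  tc i (take k.+1 (VB f)) <= tc i f + tc i (lv (take k (VB f))).
Proof.
elim: f k => [|t f IH] k //.
rewrite VB_cons size_cat => hk.
case: (leqP k.+1 (size (B [:: t]))) => h1.
  rewrite (take_cat' _ _ k.+1) h1 (take_cat' _ _ k) (ltnW h1) (tc_cons i t f).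
  by apply: leq_trans (B_prefix _ h1) _; lia.
rewrite !take_cat_ge; try lia.
have -> : k.+1 - size (B [:: t]) = (k - size (B [:: t])).+1 by lia.
rewrite tc_cat lv_cat !tc_cat B_balance (tc_cons i t f).
have := IH (k - size (B [:: t])); lia.
Qed.

Lemma filter_take A (a : pred A) (s : seq A) m :
  filter a (take m s) = take (count a (take m s)) (filter a s).
Proof.
elim: s m => [|x s IH] [|m] //=; first by rewrite take0.
by case: (a x) => //=; rewrite IH.
Qed.

Lemma tc_lv_decomp d j (P : seq (mtree d)) :
  tc j (lv P) = \sum_(k < d) tc j (lv (tf k P)).
Proof.
elim: P => [|u P IH] /=; first by rewrite big1.
rewrite lv_cons tc_cat IH.
have -> : \sum_(k < d) tc j (lv (tf k (u :: P))) =
          \sum_(k < d) ((typ u == k) * tc j (children u) + tc j (lv (tf k P))).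
  by apply: eq_bigr => k _; rewrite /tf /=; case: (typ u == k); rewrite ?lv_cons ?tc_cat ?mul1n ?mul0n.
rewrite big_split /=; congr (_ + _).
rewrite (bigD1 (typ u)) //= eqxx mul1n big1 ?addn0 // => k hk.
by rewrite eq_sym (negbTE hk).
Qed.

Lemma tc_lv_take_mono d j (L : seq (mtree d)) p q : p <= q ->
  tc j (lv (take p L)) <= tc j (lv (take q L)).
Proof.
move=> h; rewrite -(cat_take_drop p (take q L)) -take_min (minn_idPl h) lv_cat tc_cat.
exact: leq_addr.
Qed.

Lemma lemG d (f : seq (mtree d)) (s : 'I_d -> nat) :
  (forall i, tc i f + \sum_(k < d) tc i (lv (take (s k) (tf k (VB f)))) <= s i) ->
  forall i, tc i (VB f) <= s i.
Proof.
move=> hs; apply/forallP; apply: contraT; rewrite negb_forall => hex.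
pose P m := [exists i, s i < tc i (take m (VB f))].
have hP : exists m, P m.
  exists (size (VB f)); rewrite /P take_size.
  by case/existsP: hex => i hi; apply/existsP; exists i; rewrite ltnNge.
case: (ex_minnP hP) => m hm hmin.
case: m hm hmin => [|k] hm hmin.
  by case/existsP: hm => i; rewrite take0.
have hk : k < size (VB f).
  rewrite ltnNge; apply/negP => hk.
  have e1 : take k (VB f) = VB f := take_oversize hk.
  have e2 : take k.+1 (VB f) = VB f := take_oversize (leqW hk).
  have := hmin k; rewrite /P e1; rewrite /P e2 in hm.
  by move=> /(_ hm); rewrite ltnn.
have hle : forall i, tc i (take k (VB f)) <= s i.
  move=> i; rewrite leqNgt; apply/negP => hi.
  have : k.+1 <= k by apply: hmin; apply/existsP; exists i.
  by rewrite ltnn.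
case/existsP: hm => i hi.
have := VB_prefix i hk; rewrite tc_lv_decomp.
have : \sum_(k0 < d) tc i (lv (tf k0 (take k (VB f)))) <=
       \sum_(k0 < d) tc i (lv (take (s k0) (tf k0 (VB f)))).
  apply: leq_sum => k0 _; rewrite /tf filter_take -/(tf k0 _) -/(tc k0 _).
  exact: tc_lv_take_mono.
have := hs i; lia.
Qed.

Definition cons d (chl : 'I_d -> nat -> seq 'I_d) (pos : 'I_d -> nat) (L : seq (mtree d)) :=
  forall i k, k < tc i L ->
    map (@typ d) (children (nth (MNode i [::]) (tf i L) k)) = chl i (pos i + k).

Definition adv d (pos : 'I_d -> nat) (L : seq (mtree d)) := fun i => pos i + tc i L.

Lemma size_tf d i (L : seq (mtree d)) : size (tf i L) = tc i L.
Proof. by rewrite size_filter. Qed.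

Lemma tf_cat d i (L1 L2 : seq (mtree d)) : tf i (L1 ++ L2) = tf i L1 ++ tf i L2.
Proof. by rewrite /tf filter_cat. Qed.

Lemma cons_ext d chl (p q : 'I_d -> nat) L : (forall i, p i = q i) -> cons chl p L -> cons chl q L.
Proof. by move=> h H i k hk; rewrite -h H. Qed.

Lemma cons_cat d chl (pos : 'I_d -> nat) (L1 L2 : seq (mtree d)) :
  cons chl pos (L1 ++ L2) <-> cons chl pos L1 /\ cons chl (adv pos L1) L2.
Proof.
split.
  move=> H; split.
    move=> i k hk; have := H i k; rewrite tc_cat tf_cat nth_cat size_tf hk.
    by apply; rewrite ltn_addr.
  move=> i k hk; have := H i (tc i L1 + k); rewrite tc_cat tf_cat nth_cat size_tf.
  have -> : (tc i L1 + k < tc i L1) = false by rewrite ltnNge leq_addr.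
  by rewrite addKn /adv addnA; apply; rewrite ltn_add2l.
move=> [H1 H2] i k; rewrite tc_cat tf_cat nth_cat size_tf => hk.
case: ltnP => h; first exact: H1.
have := H2 i (k - tc i L1); rewrite /adv -addnA subnKC //; apply.
by rewrite ltn_subLR.
Qed.

Lemma tc_single d i (u : mtree d) : tc i [:: u] = (typ u == i).
Proof. by rewrite /tc /= addn0. Qed.

Lemma cons_single d chl (pos : 'I_d -> nat) (u : mtree d) :
  cons chl pos [:: u] <-> map (@typ d) (children u) = chl (typ u) (pos (typ u)).
Proof.
split.
  by move=> H; have := H (typ u) 0; rewrite tc_single eqxx /tf /= eqxx addn0; apply.
move=> H i k; rewrite tc_single /tf /=; case: eqP => // <- /=.
by case: k => //= _; rewrite addn0.
Qed.

Lemma cons_nil d chl (pos : 'I_d -> nat) : cons chl pos [::].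
Proof. by []. Qed.

Lemma cons_consE d chl (pos : 'I_d -> nat) (u : mtree d) L :
  cons chl pos (u :: L) <->
  map (@typ d) (children u) = chl (typ u) (pos (typ u)) /\ cons chl (adv pos [:: u]) L.
Proof. by rewrite -cat1s cons_cat cons_single. Qed.

Lemma tc_map_typ d i (F G : seq (mtree d)) : map (@typ d) F = map (@typ d) G -> tc i F = tc i G.
Proof.
by move=> h; rewrite /tc -!(count_map (@typ d) (fun c => c == i)) h.
Qed.

Lemma cons_children d chl (pos : 'I_d -> nat) (F G : seq (mtree d)) :
  map (@typ d) F = map (@typ d) G -> cons chl pos F -> cons chl pos G ->
  map (fun u => map (@typ d) (children u)) F = map (fun u => map (@typ d) (children u)) G.
Proof.
elim: F G pos => [|u F IH] [|v G] pos //= [eu eFG] /cons_consE [hu hF] /cons_consE [hv hG].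
rewrite hu hv eu; congr (_ :: _); apply: (IH _ (adv pos [:: u])) => //.
by apply: cons_ext hG => i; rewrite /adv !tc_single eu.
Qed.

Lemma rebuild d (F G : seq (mtree d)) :
  map (@typ d) F = map (@typ d) G ->
  map (fun u => size (children u)) F = map (fun u => size (children u)) G ->
  lv F = lv G -> F = G.
Proof.
elim: F G => [|[a cs] F IH] [|[b cs'] G] //= [eab eFG] [ecs eFG'].
rewrite !lv_cons /= => hl.
have e1 : cs = cs'.
  by rewrite -(take_size_cat (lv F) (erefl (size cs))) hl ecs take_size_cat.
subst cs'; move: hl => /(congr1 (drop (size cs))); rewrite !drop_size_cat // => hl.
by rewrite eab (IH G).
Qed.

Lemma lev_uniq d chl n (F G : seq (mtree d)) (pos : 'I_d -> nat) :
  W F <= n -> W G <= n -> map (@typ d) F = map (@typ d) G ->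
  cons chl pos (B F) -> cons chl pos (B G) -> F = G.
Proof.
elim: n F G pos => [|n IH] F G pos hF hG e.
  by move: hF hG; rewrite !leqn0 => /eqP/W_eq0 -> /eqP/W_eq0 ->.
rewrite (B_rec F) (B_rec G) => /cons_cat [cF cF'] /cons_cat [cG cG'].
case: (posnP (size F)) => [/size0nil eF|nF].
  by subst F; case: G e {hG cG cG'}.
have nG : 0 < size G by rewrite -(size_map (@typ d)) -e size_map.
have ech := cons_children e cF cG.
have el : lv F = lv G.
  apply: (IH _ _ (adv pos F)).
  - by rewrite -ltnS (leq_trans (W_lv_lt nF)).
  - by rewrite -ltnS (leq_trans (W_lv_lt nG)).
  - by rewrite /lv !map_flatten -!map_comp; exact: (congr1 flatten ech).
  - exact: cF'.
  - by apply: cons_ext cG' => i; rewrite /adv (tc_map_typ i e).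
apply: rebuild => //.
have hs : forall H : seq (mtree d), map (fun u => size (children u)) H =
    map size (map (fun u => map (@typ d) (children u)) H).
  by move=> H; rewrite -map_comp; apply: eq_map => u /=; rewrite size_map.
by rewrite !hs ech.
Qed.

Lemma forest_uniq d chl (f g : seq (mtree d)) (pos : 'I_d -> nat) :
  map (@typ d) f = map (@typ d) g -> cons chl pos (VB f) -> cons chl pos (VB g) -> f = g.
Proof.
elim: f g pos => [|t f IH] [|t' g] pos //= [et efg].
rewrite !VB_cons => /cons_cat [c1 c2] /cons_cat [c1' c2'].
have ett : [:: t] = [:: t'].
  apply: (lev_uniq (n := W [:: t] + W [:: t']) (pos := pos) _ _ _ c1 c1').
  - exact: leq_addr.
  - exact: leq_addl.
  - by rewrite /= et.
case: ett => ett; subst t'; congr (_ :: _); exact: IH c2 c2'.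
Qed.

Definition budget d (chl : 'I_d -> nat -> seq 'I_d) N (pos : 'I_d -> nat) :=
  \sum_(i < d) \sum_(pos i <= k < N) size (chl i k).
Definition incr d (pos : 'I_d -> nat) (a : 'I_d) := fun i => pos i + (a == i).
Fixpoint clists d (chl : 'I_d -> nat -> seq 'I_d) (pos : 'I_d -> nat) (L : seq 'I_d) :=
  if L is a :: L' then chl a (pos a) :: clists chl (incr pos a) L' else [::].
Definition advL d (pos : 'I_d -> nat) (L : seq 'I_d) := fun i => pos i + count (pred1 i) L.

Lemma size_clists d chl (pos : 'I_d -> nat) L : size (clists chl pos L) = size L.
Proof. by elim: L pos => //= a L IH pos; rewrite IH. Qed.

Lemma budget_ext d chl N (p q : 'I_d -> nat) : (forall i, p i = q i) -> budget chl N p = budget chl N q.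
Proof. by move=> h; apply: eq_bigr => i _; rewrite h. Qed.

Lemma budget_incr d chl N (pos : 'I_d -> nat) a :
  (forall i k, N <= k -> chl i k = [::]) ->
  budget chl N pos = size (chl a (pos a)) + budget chl N (incr pos a).
Proof.
move=> hN; rewrite /budget (bigD1 a) //= [in RHS](bigD1 a) //= addnA; congr (_ + _).
  rewrite /incr eqxx addn1; case: (ltnP (pos a) N) => h.
    by rewrite big_ltn.
  by rewrite hN // !big_geq // ltnW.
by apply: eq_bigr => i hi; rewrite /incr eq_sym (negbTE hi) addn0.
Qed.

Lemma budget_clists d chl N (pos : 'I_d -> nat) L :
  (forall i k, N <= k -> chl i k = [::]) ->
  budget chl N pos = sumn (map size (clists chl pos L)) + budget chl N (advL pos L).
Proof.
move=> hN; elim: L pos => [|a L IH] pos /=.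
  by apply: budget_ext => i; rewrite /advL addn0.
rewrite (budget_incr pos a hN) IH -addnA; congr (_ + (_ + _)).
by apply: budget_ext => i; rewrite /advL /incr /= -addnA.
Qed.

Lemma cons_lists d chl (pos : 'I_d -> nat) (F : seq (mtree d)) :
  cons chl pos F <-> map (fun u => map (@typ d) (children u)) F = clists chl pos (map (@typ d) F).
Proof.
elim: F pos => [|u F IH] pos /=; first by split.
rewrite cons_consE; split.
  move=> [h1 h2]; rewrite h1; congr (_ :: _); apply/IH.
  by apply: cons_ext h2 => i; rewrite /adv /incr tc_single.
case=> h1 h2; split => //; apply: cons_ext (_ : cons chl (incr pos (typ u)) F).
  by move=> i; rewrite /adv /incr tc_single.
exact/IH.
Qed.

Lemma lev_exist d chl N :
  (forall (i : 'I_d) k, N <= k -> chl i k = [::]) ->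
  forall L pos, exists F : seq (mtree d), map (@typ d) F = L /\ cons chl pos (B F).
Proof.
move=> hN L pos; move: {2}(size L + budget chl N pos) (leqnn (size L + budget chl N pos)) => m.
elim: m L pos => [|m IH] L pos hm.
  by case: L hm => // _; exists [::].
case: L hm => [|a L0] hm; first by exists [::].
set L := a :: L0; set C := clists chl pos L.
have [F' [eF' cF']] : exists F' : seq (mtree d), map (@typ d) F' = flatten C /\
    cons chl (advL pos L) (B F').
  apply: IH; move: hm; rewrite (budget_clists pos L hN) size_flatten /shape -/C.
  by rewrite [size L]/= ; lia.
set Fs := reshape (map size C) F'.
have hsC : size C = size L by rewrite size_clists.
have hsF : size Fs = size L by rewrite size_reshape size_map.
exists [seq MNode p.1 p.2 | p <- zip L Fs].
have eT : map (@typ d) [seq MNode p.1 p.2 | p <- zip L Fs] = L.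
  rewrite -map_comp (eq_map (g := fst)); last by case.
  by have := @unzip1_zip _ _ L Fs; rewrite hsF leqnn; apply.
have eC : map (@children d) [seq MNode p.1 p.2 | p <- zip L Fs] = Fs.
  rewrite -map_comp (eq_map (g := snd)); last by case.
  by have := @unzip2_zip _ _ L Fs; rewrite hsF leqnn; apply.
split => //.
rewrite B_rec; apply/cons_cat; split.
  apply/cons_lists; rewrite eT -/C.
  rewrite (map_comp (map (@typ d)) (@children d)) eC /Fs map_reshape eF'.
  exact: (flattenK C).
have -> : lv [seq MNode p.1 p.2 | p <- zip L Fs] = F'.
  rewrite /lv eC /Fs reshapeKr // -(size_map (@typ d)) eF' size_flatten.
  by [].
apply: cons_ext cF' => i; rewrite /adv /advL; congr (_ + _).
by rewrite -[in LHS]eT count_map.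
Qed.

Lemma forest_exist d chl N :
  (forall (i : 'I_d) k, N <= k -> chl i k = [::]) ->
  forall c pos, exists f : seq (mtree d), map (@typ d) f = c /\ cons chl pos (VB f).
Proof.
move=> hN; elim=> [|a c IH] pos; first by exists [::].
have [F [eF cF]] := lev_exist hN [:: a] pos.
case: F eF cF => [|t [|? ?]] // [<-] cF.
have [f [ef cf]] := IH (adv pos (B [:: t])).
exists (t :: f); split; first by rewrite /= ef.
by rewrite VB_cons; apply/cons_cat.
Qed.

Definition okp d (p : mtree d * option 'I_d) : bool :=
  if p.2 is Some j then j != typ p.1 else true.

Definition nosame d (u : mtree d) : bool := all (fun c => typ c != typ u) (children u).

Lemma gb_ok d n (P : seq (mtree d * option 'I_d)) :
  all (@nosame d) (map fst (gb (@vsel d) n P)) -> all (@okp d) P -> all (@okp d) (gb (@vsel d) n P).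
Proof.
elim: n P => [|n IH] P //=.
rewrite !map_cat !all_cat => /andP [h1 h2] h3; rewrite h3 /=.
apply: IH => //.
elim: P h1 {h2 h3} => [|q P IHP] //= /andP [hq hP].
rewrite all_cat IHP // andbT /vsel all_map.
by apply: sub_all hq => c /=; rewrite eq_sym.
Qed.

Lemma vertices_par_ok d (f : mforest d) :
  all (@nosame d) (vertices f) -> all (@okp d) (vertices_par f).
Proof.
rewrite /vertices /vertices_par; elim: f => [|t f IH] //=.
rewrite !map_cat !all_cat => /andP [h1 h2]; rewrite IH // andbT.
by rewrite /bfs bfs_gb; apply: gb_ok => //; rewrite -bfs_gb.
Qed.

Lemma filter_ok d i (s : seq (mtree d * option 'I_d)) : all (@okp d) s ->
  [seq p <- s | (typ p.1 == i) && (p.2 != Some i)] = [seq p <- s | typ p.1 == i].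
Proof.
elim: s => [|p s IH] //= /andP [hp hs]; rewrite IH //.
case: (typ p.1 =P i) => //= e.
suff -> : p.2 != Some i by [].
move: hp; rewrite /okp; case: p.2 => //= j hj.
by apply/eqP; case => ej; move: hj; rewrite ej e eqxx.
Qed.

Lemma sub_roots_tf d (f : mforest d) i :
  all (@nosame d) (vertices f) -> sub_roots f i = tf i (VB f).
Proof.
move=> h; rewrite /sub_roots /VB -vertices_B /vertices /tf filter_map filter_ok //.
exact: vertices_par_ok.
Qed.

Lemma bfs_single A (sel : A -> seq A) n a : sel a = [::] -> 0 < n -> bfs sel n a = [:: a].
Proof.
move=> h; case: n => // n _; rewrite /bfs bfs_gb /= h /= gb_nil.
by [].
Qed.

Lemma sub_vertices_tf d (f : mforest d) i :
  all (@nosame d) (vertices f) -> sub_vertices f i = tf i (VB f).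
Proof.
move=> h; rewrite /sub_vertices sub_roots_tf //.
have : all (fun t => (typ t == i) && nosame t) (tf i (VB f)).
  rewrite all_filter; rewrite vertices_B in h.
  by apply: sub_all h => u /= ->; rewrite implybE orbC; case: (typ u == i).
elim: (tf i (VB f)) => [|t s IH] //= /andP [/andP [/eqP ti nt] hs].
rewrite bfs_single ?IH //; last by rewrite tsizeE.
move: nt; rewrite /nosame ti; elim: (children t) => //= c cs IHc /andP [hc hcs].
by rewrite (negbTE hc) IHc.
Qed.

Lemma tc_lv_sum d j (L : seq (mtree d)) : tc j (lv L) = \sum_(u <- L) pch u j.
Proof. by elim: L => [|u L IH]; rewrite ?big_nil ?big_cons // lv_cons tc_cat IH. Qed.

Lemma sumz T (s : seq T) (F : T -> nat) :
  (\sum_(u <- s) (F u)%:Z)%R = Posz (\sum_(u <- s) F u).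
Proof. by elim: s => [|u s IH]; rewrite ?big_nil ?big_cons // IH PoszD. Qed.

Lemma sum_constz T (s : seq T) (c : int) : (\sum_(u <- s) c)%R = (c *+ size s)%R.
Proof. by rewrite big_const_seq iter_addr_0 count_predT. Qed.

Lemma Psi_eq d (f : mforest d) i : all (@nosame d) (vertices f) ->
  Psi f i = mkseq (fun k => [ffun j => (\sum_(u <- take k (tf i (VB f)))
                ((pch u j)%:Z - (i == j)%:Z))%R]) (tc i (VB f)).+1.
Proof. by move=> h; rewrite /Psi ffunE sub_vertices_tf // size_tf. Qed.

Lemma xlen_Psi d (f : mforest d) i : all (@nosame d) (vertices f) ->
  xlen (Psi f) i = tc i (VB f).
Proof. by move=> h; rewrite /xlen Psi_eq // size_mkseq. Qed.

Lemma xval_Psi d (f : mforest d) i j k : all (@nosame d) (vertices f) ->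
  k <= tc i (VB f) ->
  xval (Psi f) i j k = (Posz (tc j (lv (take k (tf i (VB f))))) - Posz ((i == j) * k)%N)%R.
Proof.
move=> h hk; rewrite /xval Psi_eq // nth_mkseq // ffunE sumrB sumz -tc_lv_sum.
rewrite sum_constz size_takel ?size_tf // PoszM; congr (_ - _)%R.
by rewrite -mulr_natr natz.
Qed.

Lemma tc_lv_take_nth d j (L : seq (mtree d)) k x0 : k < size L ->
  tc j (lv (take k.+1 L)) = tc j (lv (take k L)) + pch (nth x0 L k) j.
Proof.
move=> hk; rewrite (take_nth x0 hk) -cats1 lv_cat tc_cat; congr (_ + _).
by rewrite /lv /= cats0.
Qed.

Definition cnt d (x : Sdata d) (i j : 'I_d) (k : nat) : nat :=
  absz (xval x i j k.+1 - xval x i j k + (i == j)%:Z)%R.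
Definition leI d := fun a b : 'I_d => (a <= b)%N.
Definition chlx d (x : Sdata d) (i : 'I_d) (k : nat) : seq 'I_d :=
  if k < xlen x i then sort (@leI d) (flatten [seq nseq (cnt x i j k) j | j <- enum 'I_d])
  else [::].

Lemma count_decomp d (a : pred 'I_d) (s : seq 'I_d) :
  count a s = \sum_(j < d) a j * count (pred1 j) s.
Proof.
elim: s => [|y s IH] /=; first by rewrite big1 // => j _; rewrite muln0.
rewrite IH; under eq_bigr => j _ do rewrite mulnDr.
rewrite big_split /=; congr (_ + _).
rewrite (bigD1 y) //= eqxx muln1 big1 ?addn0 // => j hj.
by rewrite eq_sym (negbTE hj) muln0.
Qed.

Lemma perm_pred1 d (s1 s2 : seq 'I_d) :
  (forall a, count (pred1 a) s1 = count (pred1 a) s2) -> perm_eq s1 s2.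
Proof.
by move=> h; apply/permP => a; rewrite !(count_decomp a); apply: eq_bigr => j _; rewrite h.
Qed.

Lemma count_flat_nseq d (c : 'I_d -> nat) a :
  count (pred1 a) (flatten [seq nseq (c j) j | j <- enum 'I_d]) = c a.
Proof.
rewrite count_flatten -map_comp sumnE big_map big_enum /=.
rewrite (bigD1 a) //= count_nseq /= eqxx mul1n big1 ?addn0 // => j hj.
by rewrite count_nseq /= (negbTE hj) mul0n.
Qed.

Lemma count_chlx d (x : Sdata d) i k a :
  count (pred1 a) (chlx x i k) = if k < xlen x i then cnt x i a k else 0.
Proof.
rewrite /chlx; case: ifP => // _.
set S := flatten _.
have hp : perm_eq (sort (@leI d) S) S by rewrite perm_sort perm_refl.
by rewrite (permP hp) count_flat_nseq.
Qed.

Lemma leI_total d : total (@leI d).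
Proof. by move=> a b; exact: leq_total. Qed.

Lemma leI_trans d : transitive (@leI d).
Proof. by move=> a b c; exact: leq_trans. Qed.

Lemma leI_anti d : antisymmetric (@leI d).
Proof. by move=> a b h; apply: val_inj; apply: anti_leq. Qed.

Lemma sorted_chlx d (x : Sdata d) i k : sorted (@leI d) (chlx x i k).
Proof. by rewrite /chlx; case: ifP => // _; apply: sort_sorted; exact: leI_total. Qed.

Lemma absz_helper (a p k : nat) (b : bool) :
  absz (Posz (a + p) - Posz (b * k.+1)%N - (Posz a - Posz (b * k)%N) + Posz b)%R = p.
Proof. case: b; lia. Qed.

Lemma cnt_Psi d (f : mforest d) i j k x0 : all (@nosame d) (vertices f) ->
  k < tc i (VB f) -> cnt (Psi f) i j k = pch (nth x0 (tf i (VB f)) k) j.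
Proof.
move=> h hk; rewrite /cnt !xval_Psi // ?(ltnW hk) //.
rewrite (tc_lv_take_nth _ x0) ?size_tf //.
exact: absz_helper.
Qed.

Lemma all_tf d i (P : pred (mtree d)) L : all P L -> all P (tf i L).
Proof. by move=> h; rewrite /tf all_filter; apply: sub_all h => u /= ->; rewrite implybT. Qed.

Lemma children_chlx d (f : mforest d) i k : in_Fd f -> all (@nosame d) (vertices f) ->
  k < tc i (VB f) ->
  map (@typ d) (children (nth (MNode i [::]) (tf i (VB f)) k)) = chlx (Psi f) i k.
Proof.
move=> hF h hk.
have hs : sorted (@leI d) (map (@typ d) (children (nth (MNode i [::]) (tf i (VB f)) k))).
  rewrite sorted_map; move: hF; rewrite /in_Fd vertices_B -/(VB f) => /(all_tf i).
  by move/all_nthP => /(_ (MNode i [::]) k); rewrite size_tf; apply.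
apply: (sorted_eq (@leI_trans d) (@leI_anti d)) => //; first exact: sorted_chlx.
apply: perm_pred1 => a; rewrite count_chlx xlen_Psi // hk.
by rewrite (cnt_Psi a (MNode i [::])) // count_map.
Qed.

Lemma cons_Psi d (f : mforest d) : in_Fd f -> all (@nosame d) (vertices f) ->
  cons (chlx (Psi f)) (fun _ => 0) (VB f).
Proof. by move=> hF h i k hk; rewrite add0n; apply: children_chlx. Qed.

Lemma part2 d (r : 'I_d -> nat) (f g : mforest d) :
  in_barFr r f -> in_barFr r g -> Phi f = Phi g -> f = g.
Proof.
move=> [[hF _ _ _] hf] [[hG _ _ _] hg] [eP eR].
apply: (forest_uniq (chl := chlx (Psi f)) (pos := fun _ => 0)) => //.
  exact: cons_Psi.
rewrite eP; exact: cons_Psi.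
Qed.

Lemma tf_nosame d (f : mforest d) i : all (@nosame d) (vertices f) ->
  all (fun u => (typ u == i) && nosame u) (tf i (VB f)).
Proof.
move=> h; rewrite /tf all_filter; rewrite vertices_B in h.
by apply: sub_all h => u /= ->; rewrite implybE orbC; case: (typ u == i).
Qed.

Lemma pch_self d (u : mtree d) : nosame u -> pch u (typ u) = 0.
Proof.
rewrite /nosame /pch; elim: (children u) => //= c cs IH /andP [hc hcs].
by rewrite (negbTE hc) IH.
Qed.

Lemma tc_diag0 d (f : mforest d) i k : all (@nosame d) (vertices f) ->
  tc i (lv (take k (tf i (VB f)))) = 0.
Proof.
move=> /(tf_nosame i); rewrite -{1}(cat_take_drop k (tf i (VB f))) all_cat => /andP [h _].
rewrite tc_lv_sum; elim: (take k _) h => [|u s IH] /=; first by rewrite big_nil.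
by case/andP => /andP [/eqP ei hu] hs; rewrite big_cons IH // -ei pch_self.
Qed.

Lemma xval_diag d (f : mforest d) i k : all (@nosame d) (vertices f) ->
  k <= tc i (VB f) -> xval (Psi f) i i k = (- Posz k)%R.
Proof. by move=> h hk; rewrite xval_Psi // tc_diag0 // eqxx mul1n sub0r. Qed.

Lemma sum_posz_sub d (A B : 'I_d -> nat) :
  (\sum_(i < d) (Posz (A i) - Posz (B i)))%R = (Posz (\sum_(i < d) A i) - Posz (\sum_(i < d) B i))%R.
Proof. by rewrite sumrB !sumz. Qed.

Lemma sum_eqdiag d (c : 'I_d -> nat) j : \sum_(i < d) (i == j) * c i = c j.
Proof.
rewrite (bigD1 j) //= eqxx mul1n big1 ?addn0 // => i hi.
by rewrite (negbTE hi).
Qed.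

Lemma rj_tc d (r : 'I_d -> nat) (f : mforest d) j : in_Cr r (root_types f) -> r j = tc j f.
Proof. by case=> _ h; rewrite -h /root_types count_map. Qed.

Lemma sum_xval d (f : mforest d) (s : 'I_d -> nat) j : all (@nosame d) (vertices f) ->
  (forall i, s i <= tc i (VB f)) ->
  (\sum_(i < d) xval (Psi f) i j (s i))%R =
  (Posz (\sum_(i < d) tc j (lv (take (s i) (tf i (VB f))))) - Posz (s j))%R.
Proof.
move=> h hs; rewrite (eq_bigr (fun i => Posz (tc j (lv (take (s i) (tf i (VB f))))) -
   Posz ((i == j) * s i)))%R; last by move=> i _; rewrite xval_Psi.
by rewrite sum_posz_sub sum_eqdiag.
Qed.

Lemma part1 d (r : 'I_d -> nat) (f : mforest d) :
  in_barFr r f -> in_barSr r (Phi f).1 /\ in_Cr r (Phi f).2.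
Proof.
move=> [[hF hsz hhas hC] h]; split => //=.
have hxl : forall i, xlen (Psi f) i = tc i (VB f) by move=> i; apply: xlen_Psi.
have hrj : forall j, r j = tc j f by move=> j; apply: rj_tc.
split; last first.
  by move=> i k; rewrite hxl => hk; apply: xval_diag.
split.
- split.
  + by move=> i; rewrite /Psi ffunE size_mkseq.
  + by move=> i j; rewrite xval_Psi // take0 muln0 subr0.
  + move=> i j k hij; rewrite hxl => hk; rewrite !xval_Psi // ?(ltnW hk) //.
    rewrite (negbTE hij) !mul0n !subr0 lez_nat; exact: tc_lv_take_mono.
  + move=> i k; rewrite hxl => hk; rewrite !xval_diag // ?(ltnW hk) //; lia.
- by move=> i; rewrite hxl -has_count /VB -vertices_B; apply: hhas.
split.
  split; first by move=> i; rewrite hxl.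
  move=> j; under eq_bigr => i _ do rewrite hxl.
  rewrite (@sum_xval _ _ (fun i => tc i (VB f))) //.
  under eq_bigr => i _ do rewrite -(size_tf i (VB f)) take_size.
  rewrite -tc_lv_decomp hrj; have := VB_balance j f; lia.
move=> s [hs1 hs2] i; rewrite hxl.
apply: lemG => {}i; have := hs2 i; rewrite sum_xval //; last by move=> k; rewrite -hxl.
rewrite hrj; lia.
Qed.

Lemma cons_all d chl (pos : 'I_d -> nat) (L : seq (mtree d)) (P : pred (mtree d)) :
  (forall u k, map (@typ d) (children u) = chl (typ u) k -> P u) ->
  cons chl pos L -> all P L.
Proof.
move=> hP; elim: L pos => [|u L IH] pos //= /cons_consE [h1 h2].
by rewrite (hP _ _ h1) (IH _ h2).
Qed.

Lemma all_neq_count d (s : seq 'I_d) i : count (pred1 i) s = 0 -> all (fun a => a != i) s.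
Proof. by elim: s => //= a s IH; case: eqP => //= _; rewrite add0n. Qed.

Lemma cnt_int d (x : Sdata d) i j k : in_Sd x ->
  (forall i k, k <= xlen x i -> xval x i i k = (- Posz k)%R) -> k < xlen x i ->
  Posz (cnt x i j k) = (xval x i j k.+1 - xval x i j k + Posz (i == j))%R.
Proof.
move=> [_ _ hm _] hdg hk; rewrite /cnt.
case: (eqVneq i j) => [<-|hij].
  by rewrite !hdg ?(ltnW hk) //=; lia.
by have := hm i j k hij hk; rewrite /=; lia.
Qed.

Definition S d (x : Sdata d) (k i : 'I_d) (p : nat) := \sum_(l < p) count (pred1 i) (chlx x k l).

Lemma S_int d (x : Sdata d) k i p : in_Sd x ->
  (forall i k, k <= xlen x i -> xval x i i k = (- Posz k)%R) -> p <= xlen x k ->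
  Posz (S x k i p) = (xval x k i p + Posz ((k == i) * p))%R.
Proof.
move=> hS hdg; elim: p => [|p IH] hp.
  by rewrite /S big_ord0 muln0 addr0; case: hS => _ -> _ _.
rewrite /S big_ord_recr /= -/(S x k i p) PoszD IH ?(ltnW hp) //.
rewrite count_chlx hp cnt_int //; lia.
Qed.

Lemma S_mono d (x : Sdata d) k i p q : p <= q -> S x k i p <= S x k i q.
Proof.
move=> h; rewrite /S -!(big_mkord xpredT (fun l => count (pred1 i) (chlx x k l))).
by rewrite (big_cat_nat (leq0n p) h) /= leq_addr.
Qed.

Lemma S_flat d (x : Sdata d) k i p : xlen x k <= p -> S x k i p = S x k i (xlen x k).
Proof.
elim: p => [|p IH] h.
  by rewrite leqn0 in h; rewrite (eqP h).
case: (ltngtP (xlen x k) p.+1) h => // h _; last by rewrite h.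
rewrite ltnS in h.
by rewrite /S big_ord_recr /= -/(S x k i p) IH // count_chlx ltnNge h addn0.
Qed.

Lemma S_le d (x : Sdata d) k i p : S x k i p <= S x k i (xlen x k).
Proof.
case: (leqP p (xlen x k)) => h; first exact: S_mono.
by rewrite S_flat // ltnW.
Qed.

Lemma cons_S d (x : Sdata d) (V : seq (mtree d)) k i p :
  cons (chlx x) (fun _ => 0) V -> p <= tc k V ->
  tc i (lv (take p (tf k V))) = S x k i p.
Proof.
move=> hc; elim: p => [|p IH] hp; first by rewrite take0 /S big_ord0.
rewrite (tc_lv_take_nth _ (MNode k [::])) ?size_tf // IH ?(ltnW hp) //.
rewrite /S big_ord_recr /=; congr (_ + _).
by rewrite /pch -(count_map (@typ d) (pred1 i)) (hc k p hp) add0n.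
Qed.

Lemma eq_sdata d (a b : seq {ffun 'I_d -> int}) : size a = size b ->
  (forall k j, k < size a -> (nth [ffun=> 0%R] a k) j = (nth [ffun=> 0%R] b k) j) -> a = b.
Proof.
move=> hs h; apply: (eq_from_nth (x0 := [ffun=> 0%R])) => // k hk.
by apply/ffunP => j; apply: h.
Qed.

Lemma part3 d (r : 'I_d -> nat) (x : Sdata d) (c : seq 'I_d) :
  in_barSr r x -> in_Cr r c -> exists f : mforest d, in_barFr r f /\ Phi f = (x, c).
Proof.
move=> [[hSd hpos [[hsol1 hsol2] hmin]] hdg] hC.
pose N := \sum_(i < d) xlen x i.
have hN : forall i k, N <= k -> chlx x i k = [::].
  move=> i k hk; rewrite /chlx ifN // -leqNgt (leq_trans _ hk) //.
  by rewrite /N (bigD1 i) //= leq_addr.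
have [f [ef cf]] := forest_exist hN c (fun _ => 0).
set V := VB f.
have hall : all (fun u => sorted (fun a b => (typ a <= typ b)%N) (children u) && nosame u) V.
  apply: (cons_all (chl := chlx x) (pos := fun _ => 0)) => // u k e.
  apply/andP; split.
    by have := sorted_chlx x (typ u) k; rewrite -e sorted_map.
  rewrite /nosame; have := all_neq_count (s := chlx x (typ u) k) (i := typ u).
  rewrite -e all_map; apply; rewrite e count_chlx; case: ifP => // hk.
  by apply/eqP; rewrite -eqz_nat cnt_int // eqxx !hdg ?(ltnW hk) //; lia.
have hns : all (@nosame d) (vertices f).
  by rewrite vertices_B; apply: sub_all hall => u /andP [].
have hrj : forall j, r j = tc j f.
  by move=> j; case: hC => _ <-; rewrite -ef count_map.
have hle : forall i, tc i V <= xlen x i.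
  apply: lemG => i.
  have hS : forall k, tc i (lv (take (xlen x k) (tf k V))) <= S x k i (xlen x k).
    move=> k; case: (leqP (xlen x k) (tc k V)) => h.
      by rewrite (cons_S i cf h).
    rewrite take_oversize ?size_tf ?(ltnW h) //.
    by rewrite -{1}(take_size (tf k V)) size_tf (cons_S i cf (leqnn _)) S_le.
  apply: (@leq_trans (tc i f + \sum_(k < d) S x k i (xlen x k))).
    by rewrite leq_add2l; apply: leq_sum => k _.
  have := hsol2 i.
  rewrite (eq_bigr (fun k => Posz (S x k i (xlen x k)) - Posz ((k == i) * xlen x k)))%R;
    last by move=> k _; rewrite S_int //; lia.
  rewrite sum_posz_sub sum_eqdiag hrj; lia.
have hsolm : is_solution r x (fun i => tc i V).
  split => // j.
  rewrite (eq_bigr (fun i => Posz (tc j (lv (tf i V))) - Posz ((i == j) * tc i V)))%R;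
    last first.
    move=> i _; have h1 := cons_S j cf (leqnn (tc i V)).
    have h2 := S_int j hSd hdg (hle i).
    by move: h1; rewrite -{1}(size_tf i V) take_size => h1; lia.
  rewrite sum_posz_sub sum_eqdiag -tc_lv_decomp hrj.
  have := VB_balance j f; rewrite -/V; lia.
have hm : forall i, tc i V = xlen x i.
  by move=> i; apply/eqP; rewrite eqn_leq hle (hmin _ hsolm).
exists f; split.
  split; last exact: hns.
  split.
  - by rewrite /in_Fd vertices_B; apply: sub_all hall => u /andP [].
  - by rewrite -(size_map (@typ d)) ef; case: hC.
  - by move=> i; rewrite vertices_B has_count; have := hm i; rewrite /V /VB /tc => ->.
  - by rewrite /root_types ef.
rewrite /Phi /root_types ef; congr (_, _).
apply/ffunP => i; rewrite Psi_eq //.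
apply: eq_sdata.
  have hmi : tc i (VB f) = xlen x i := hm i.
  by rewrite size_mkseq hmi /xlen prednK //; case: hSd.
move=> k j; rewrite size_mkseq ltnS => hk.
have := xval_Psi j hns hk.
rewrite /xval Psi_eq // nth_mkseq // ffunE => ->.
have h1 := cons_S j cf hk.
have h2 := S_int j hSd hdg (_ : k <= xlen x i).
rewrite /xval in h2; rewrite -/V h1 h2; first by rewrite addrK.
by have := hm i; rewrite /V => <-.
Qed.

Theorem lemma2p5 (d : nat) (r : 'I_d -> nat) :
  (2 <= d)%N -> (exists i, (0 < r i)%N) ->
  [/\ (forall f : mforest d, in_barFr r f ->
         in_barSr r (Phi f).1 /\ in_Cr r (Phi f).2),
      (forall f g : mforest d, in_barFr r f -> in_barFr r g -> Phi f = Phi g -> f = g)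
    & (forall (x : Sdata d) (c : seq 'I_d), in_barSr r x -> in_Cr r c ->
         exists f : mforest d, in_barFr r f /\ Phi f = (x, c))].
Proof.
move=> _ _; split.
- exact: part1.
- exact: part2.
- exact: part3.
Qed.
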